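(* Let $G=(V,E)$ be a finite graph, $A\subset V$, $\xi_1,\xi_2\in\{-1,1\}^A$ boundary conditions, $h\in\mathbb R^V$ an arbitrary external field and $T>0$. Then for any two increasing events $\mathtt A,\mathtt B\subset\Theta^{\bar G}$, $$\bar\mu^{\xi_1/\xi_2}_{G,h}(\mathtt A\cap\mathtt B)\ge\bar\mu^{\xi_1/\xi_2}_{G,h}(\mathtt A)\,\bar\mu^{\xi_1/\xi_2}_{G,h}(\mathtt B).$$
   Context: Extended Ising model: for a finite graph $G=(V,E)$ let $\bar G=V\cup E$. An extended configuration $\bar\sigma$ assigns $\bar\sigma_v\in\{-1,1\}$ to each $v\in V$ and $\bar\sigma_e\in\{-1,0,1\}$ to each $e\in E$, subject to $|\bar\sigma_v-\bar\sigma_e|\le1$ whenever $v$ is an endpoint of $e$. For $T>0$ and $h\in\mathbb R^V$, $\bar\mu_{G,h}(\bar\sigma)\propto\prod_{e\in E}\prod_{v\in e}W(\bar\sigma_v,\bar\sigma_e)\cdot\exp\big(\frac1T\sum_{v\in V}h_v\bar\sigma_v\big)$, where $W(a,b)=1$ if $b=a$, $W(a,b)=t$ if $b=0$, $W(a,b)=0$ if $b=-a$, and $t=(e^{2/T}-1)^{-1/2}$. For $A\subset V$ and $\xi\in\{-1,1\}^A$, $\bar\mu^{\xi}_{G,h}$ denotes $\bar\mu_{G,h}$ conditioned on $\bar\sigma_v=\xi_v$ for $v\in A$. The product measure $\bar\mu^{\xi_1/\xi_2}_{G,h}=\bar\mu^{\xi_1}_{G,h}\otimes\bar\mu^{\xi_2}_{G,h}$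 is a law on pairs $(\bar\sigma^1,\bar\sigma^2)$, viewed as elements of $\Theta^{\bar G}$ with $\Theta=\{-1,0,1\}^2$ (the value at $u\in\bar G$ is $(\bar\sigma^1_u,\bar\sigma^2_u)$). Partial order on $\Theta$: $(a,b)\succeq(c,d)$ iff $a\ge c$ and $b\le d$; extended coordinatewise to $\Theta^{\bar G}$. An event $\mathtt A\subset\Theta^{\bar G}$ is increasing if $x\in\mathtt A$ and $y\succeq x$ imply $y\in\mathtt A$. *)

(* Defs.v *)
From HB Require Import structures.
From mathcomp Require Import all_boot all_order all_algebra.
From mathcomp Require Import reals.
From mathcomp Require Import sequences exp.
Set Implicit Arguments. Unset Strict Implicit. Unset Printing Implicit Defensive.
Import Order.TTheory GRing.Theory Num.Theory.
Local Open Scope ring_scope.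

(* A finite loopless graph is given by a vertex finType V, an edge finType E
   and an endpoint map ends : E -> V * V with distinct endpoints.
   Gbar = V ⊔ E. *)
Definition Gbar (V E : finType) : finType := (V + E)%type.

(* spins in {-1,0,1} are encoded by 'I_3 through s |-> s - 1 *)
Definition sval (s : 'I_3) : int := (nat_of_ord s)%:Z - 1.

Definition xconf (V E : finType) := {ffun Gbar V E -> 'I_3}.

(* pairs of configurations = elements of Theta^{Gbar}, Theta = {-1,0,1}^2 *)
Definition pconf (V E : finType) := {ffun Gbar V E -> 'I_3 * 'I_3}.

Section Model.
Variables (V E : finType) (ends : E -> V * V).

Definition sv (s : xconf V E) (v : V) : int := sval (s (inl v)).
Definition se (s : xconf V E) (e : E) : int := sval (s (inr e)).

Definition admissible (s : xconf V E) : bool :=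
  [forall v, sv s v != 0] &&
  [forall e, (`|sv s (ends e).1 - se s e| <= 1) && (`|sv s (ends e).2 - se s e| <= 1)].

Definition agrees (A : {set V}) (xi : V -> int) (s : xconf V E) : bool :=
  [forall v in A, sv s v == xi v].

Variable R : realType.

Definition tpar (T : R) : R := (Num.sqrt (expR (2 / T) - 1))^-1.

Definition Wt (T : R) (a b : int) : R :=
  if b == a then 1 else if b == 0 then tpar T else 0.

Definition weight (T : R) (h : V -> R) (A : {set V}) (xi : V -> int)
  (s : xconf V E) : R :=
  (admissible s && agrees A xi s)%:R *
  (\prod_(e : E) (Wt T (sv s (ends e).1) (se s e) * Wt T (sv s (ends e).2) (se s e))) *
  expR (T^-1 * \sum_(v : V) h v * (sv s v)%:~R).

Definition Zpart T h A xi : R := \sum_(s : xconf V E) weight T h A xi s.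

Definition mu T h A xi (s : xconf V E) : R := weight T h A xi s / Zpart T h A xi.

Definition pfst (x : pconf V E) : xconf V E := [ffun u => (x u).1].
Definition psnd (x : pconf V E) : xconf V E := [ffun u => (x u).2].

Definition muPair T h A xi1 xi2 (Ev : {pred pconf V E}) : R :=
  \sum_(x : pconf V E | x \in Ev) mu T h A xi1 (pfst x) * mu T h A xi2 (psnd x).

End Model.

Definition theta_ge (p q : 'I_3 * 'I_3) : bool :=
  (sval q.1 <= sval p.1) && (sval p.2 <= sval q.2).

Definition pconf_ge (V E : finType) (y x : pconf V E) : Prop :=
  forall u, theta_ge (y u) (x u).

Definition increasing (V E : finType) (Ev : {pred pconf V E}) : Prop :=
  forall x y, x \in Ev -> pconf_ge y x -> y \in Ev.

(* Main.v *)
Require Import Defs.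
From HB Require Import structures.
From mathcomp Require Import all_boot all_order all_algebra.
From mathcomp Require Import reals.
From mathcomp Require Import sequences exp.
From mathcomp Require Import ring lra.
Import Order.TTheory GRing.Theory Num.Theory.
Set Implicit Arguments. Unset Strict Implicit. Unset Printing Implicit Defensive.
Local Open Scope ring_scope.

Local Notation sv3 := Defs.sval.
Definition omax (a b : 'I_3) : 'I_3 := if (a <= b)%N then b else a.
Definition omin (a b : 'I_3) : 'I_3 := if (a <= b)%N then a else b.

Ltac o3 a := case: a => [[|[|[|?]]] ?] //.

Lemma B1 (a b : 'I_3) : sv3 a != 0 -> sv3 b != 0 -> (sv3 (omax a b) != 0) && (sv3 (omin a b) != 0).
Proof. by o3 a; o3 b. Qed.

Lemma B2 (a b c d : 'I_3) : `|sv3 a - sv3 c| <= 1 -> `|sv3 b - sv3 d| <= 1 ->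
  (`|sv3 (omax a b) - sv3 (omax c d)| <= 1) && (`|sv3 (omin a b) - sv3 (omin c d)| <= 1).
Proof. by o3 a; o3 b; o3 c; o3 d. Qed.

Lemma B3 (R : realType) (T : R) (a c : 'I_3) : sv3 a != 0 -> `|sv3 a - sv3 c| <= 1 ->
  Wt T (sv3 a) (sv3 c) = if (c == 1 :> nat) then tpar T else 1.
Proof. by o3 a; o3 c. Qed.

Lemma B4 (a b : 'I_3) : sv3 (omax a b) + sv3 (omin a b) = sv3 a + sv3 b.
Proof. by rewrite /omax /omin; case: leqP => _ //; rewrite addrC. Qed.

Lemma B5 (R : realType) (F : 'I_3 -> R) (a b : 'I_3) : F (omax a b) * F (omin a b) = F a * F b.
Proof. by rewrite /omax /omin; case: leqP => _ //; rewrite mulrC. Qed.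

Lemma omaxxx a : omax a a = a. Proof. by rewrite /omax leqnn. Qed.
Lemma ominxx a : omin a a = a. Proof. by rewrite /omin leqnn. Qed.

Lemma sv3_inj (a b : 'I_3) : sv3 a = sv3 b -> a = b.
Proof. by rewrite /Defs.sval => /addIr [] /val_inj. Qed.

Definition xjoin (V E : finType) (s t : xconf V E) : xconf V E := [ffun u => omax (s u) (t u)].
Definition xmeet (V E : finType) (s t : xconf V E) : xconf V E := [ffun u => omin (s u) (t u)].

Lemma adm_lat (V E : finType) (ends : E -> V * V) (s t : xconf V E) :
  admissible ends s -> admissible ends t ->
  admissible ends (xjoin s t) && admissible ends (xmeet s t).
Proof.
move=> /andP[/forallP Hs1 /forallP Hs2] /andP[/forallP Ht1 /forallP Ht2].
have X1 : forall v, (sv (xjoin s t) v != 0) && (sv (xmeet s t) v != 0).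
  by move=> v; rewrite /sv !ffunE; apply: B1; [exact: Hs1|exact: Ht1].
have X2 : forall e, (`|sv (xjoin s t) (ends e).1 - se (xjoin s t) e| <= 1) &&
                    (`|sv (xmeet s t) (ends e).1 - se (xmeet s t) e| <= 1).
  move=> e; have /andP[a1 _] := Hs2 e; have /andP[b1 _] := Ht2 e.
  by rewrite /sv /se !ffunE; apply: B2.
have X3 : forall e, (`|sv (xjoin s t) (ends e).2 - se (xjoin s t) e| <= 1) &&
                    (`|sv (xmeet s t) (ends e).2 - se (xmeet s t) e| <= 1).
  move=> e; have /andP[_ a1] := Hs2 e; have /andP[_ b1] := Ht2 e.
  by rewrite /sv /se !ffunE; apply: B2.
apply/andP; split; apply/andP; split; apply/forallP => u.
- by case/andP: (X1 u).
- by case/andP: (X2 u) => -> _; case/andP: (X3 u) => ->.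
- by case/andP: (X1 u).
- by case/andP: (X2 u) => _ ->; case/andP: (X3 u) => _ ->.
Qed.

Lemma agr_lat (V E : finType) (A : {set V}) xi (s t : xconf V E) :
  agrees A xi s -> agrees A xi t -> agrees A xi (xjoin s t) && agrees A xi (xmeet s t).
Proof.
move=> /forallP Hs /forallP Ht.
have X : forall v, v \in A -> s (inl v) = t (inl v).
  move=> v vA; apply: sv3_inj; move: (Hs v) (Ht v); rewrite vA /= /sv.
  by move=> /eqP -> /eqP ->.
apply/andP; split; apply/forallP => v; apply/implyP => vA;
  have := Hs v; rewrite vA /= /sv !ffunE (X v vA) ?omaxxx ?ominxx;
  by rewrite -(X v vA).
Qed.

Definition gw (R : realType) (T : R) (c : 'I_3) : R :=
  (if (c == 1 :> nat) then tpar T else 1) * (if (c == 1 :> nat) then tpar T else 1).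

Lemma edge_fac (V E : finType) (ends : E -> V * V) (R : realType) (T : R) (s : xconf V E) e :
  admissible ends s ->
  Wt T (sv s (ends e).1) (se s e) * Wt T (sv s (ends e).2) (se s e) = gw T (s (inr e)).
Proof.
move=> /andP[/forallP H1 /forallP H2]; have /andP[a1 a2] := H2 e.
by rewrite /gw (B3 T (H1 (ends e).1) a1) (B3 T (H1 (ends e).2) a2).
Qed.

Lemma tpar_ge0 (R : realType) (T : R) : 0 <= tpar T.
Proof. by rewrite /tpar invr_ge0 sqrtr_ge0. Qed.

Lemma Wt_ge0 (R : realType) (T : R) a b : 0 <= Wt T a b.
Proof. by rewrite /Wt; case: ifP => // _; case: ifP => // _; exact: tpar_ge0. Qed.

Lemma weight_ge0 (V E : finType) (ends : E -> V * V) (R : realType) (T : R) h A xi (s : xconf V E) :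
  0 <= weight ends T h A xi s.
Proof.
rewrite /weight; apply: mulr_ge0; last exact: expR_ge0.
apply: mulr_ge0; first exact: ler0n.
by apply: prodr_ge0 => e _; apply: mulr_ge0; exact: Wt_ge0.
Qed.

Lemma wlat (V E : finType) (ends : E -> V * V) (R : realType) (T : R) h A xi (s t : xconf V E) :
  weight ends T h A xi s * weight ends T h A xi t <=
  weight ends T h A xi (xjoin s t) * weight ends T h A xi (xmeet s t).
Proof.
have W0 := weight_ge0 ends T h A xi.
case Hs: (admissible ends s && agrees A xi s); last first.
  by rewrite {1}/weight Hs !mul0r; apply: mulr_ge0.
case Ht: (admissible ends t && agrees A xi t); last first.
  by rewrite {2}/weight Ht !(mul0r, mulr0); apply: mulr_ge0.
move/andP: Hs => [as1 ag1]; move/andP: Ht => [as2 ag2].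
have /andP[aj am] := adm_lat as1 as2.
have /andP[gj gm] := agr_lat ag1 ag2.
suff -> : weight ends T h A xi (xjoin s t) * weight ends T h A xi (xmeet s t) =
  weight ends T h A xi s * weight ends T h A xi t by [].
rewrite /weight as1 ag1 as2 ag2 aj am gj gm !mul1r.
rewrite mulrACA [RHS]mulrACA; congr (_ * _).
  rewrite -!big_split /=; apply: eq_bigr => e _.
  rewrite !edge_fac // !ffunE; exact: B5.
rewrite -!expRD -!mulrDr -!big_split /=; congr (expR (_ * _)); apply: eq_bigr => v _.
by rewrite -!mulrDr -!intrD /sv !ffunE B4.
Qed.

Lemma AD1 (R : realFieldType) (a0 a1 b0 b1 c0 c1 d0 d1 : R) :
  0 <= a0 -> 0 <= a1 -> 0 <= b0 -> 0 <= b1 -> 0 <= c0 -> 0 <= c1 -> 0 <= d0 -> 0 <= d1 ->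
  a0 * b0 <= c0 * d0 -> a1 * b1 <= c1 * d1 -> a0 * b1 <= c1 * d0 -> a1 * b0 <= c1 * d0 ->
  (a0 + a1) * (b0 + b1) <= (c0 + c1) * (d0 + d1).
Proof.
move=> ha0 ha1 hb0 hb1 hc0 hc1 hd0 hd1 h00 h11 h01 h10.
have hp : 0 <= a0 * b1 by apply: mulr_ge0.
have hq : 0 <= a1 * b0 by apply: mulr_ge0.
have hm : 0 <= c0 * d1 by apply: mulr_ge0.
have key : (a0 * b1) * (a1 * b0) <= (c1 * d0) * (c0 * d1).
  have -> : (a0 * b1) * (a1 * b0) = (a0 * b0) * (a1 * b1) by ring.
  have -> : (c1 * d0) * (c0 * d1) = (c0 * d0) * (c1 * d1) by ring.
  by apply: ler_pM => //; apply: mulr_ge0.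
have : a0 * b1 + a1 * b0 <= c1 * d0 + c0 * d1.
  move: key h01 h10 hp hq hm.
  set p := a0 * b1; set q := a1 * b0; set k := c1 * d0; set m := c0 * d1.
  move=> key hpk hqk hp' hq' hm'.
  have [k0|kpos] := eqVneq k 0.
    rewrite k0 in hpk hqk *; lra.
  have kp : 0 < k by rewrite lt_def kpos /= (le_trans hp').
  have : 0 <= k * (k + m - p - q) by nra.
  rewrite pmulr_rge0 // => H; lra.
move=> H.
have -> : (a0 + a1) * (b0 + b1) = a0 * b0 + a1 * b1 + (a0 * b1 + a1 * b0) by ring.
have -> : (c0 + c1) * (d0 + d1) = c0 * d0 + c1 * d1 + (c1 * d0 + c0 * d1) by ring.
lra.
Qed.

Ltac stac := apply/setP => ?; rewrite !inE; case: (_ == _); case: (_ \in _); case: (_ \in _).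
Section AD.
Variables (R : realFieldType) (I : finType).

Lemma split_sub (S : {set I}) i (F : {set I} -> R) : i \in S ->
  \sum_(A : {set I} | A \subset S) F A = \sum_(A : {set I} | A \subset S :\ i) (F A + F (i |: A)).
Proof.
move=> iS; rewrite big_split /= (bigID (fun A : {set I} => i \in A)) /= addrC; congr (_ + _).
  by apply: eq_bigl => A; rewrite subsetD1.
rewrite (reindex_onto (fun A => i |: A) (fun A => A :\ i)) /=; last first.
  by move=> A /andP[_ iA]; rewrite setD1K.
apply: eq_bigl => A; rewrite subsetD1 setU11 andbT subUset sub1set iS /=.
case iA: (i \in A); last by rewrite setU1K ?iA ?eqxx ?andbT.
rewrite andbF; apply/negbTE; apply/negP => /andP[_ /eqP e].
by move: iA; rewrite -e !inE eqxx.
Qed.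

Lemma AD_gen n : forall (S : {set I}), #|S| = n ->
  forall (al be ga de : {set I} -> R),
  (forall A, 0 <= al A) -> (forall A, 0 <= be A) -> (forall A, 0 <= ga A) -> (forall A, 0 <= de A) ->
  (forall A B, al A * be B <= ga (A :|: B) * de (A :&: B)) ->
  (\sum_(A : {set I} | A \subset S) al A) * (\sum_(A : {set I} | A \subset S) be A) <=
  (\sum_(A : {set I} | A \subset S) ga A) * (\sum_(A : {set I} | A \subset S) de A).
Proof.
elim: n => [|n IH] S cS al be ga de h1 h2 h3 h4 H.
  move/eqP: cS; rewrite cards_eq0 => /eqP ->.
  have E : forall F : {set I} -> R, \sum_(A : {set I} | A \subset set0) F A = F set0.
    by move=> F; rewrite (eq_bigl (fun A => A == set0)) ?big_pred1_eq // => A; rewrite subset0.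
  by rewrite !E; have := H set0 set0; rewrite setU0 setI0.
have [i iS] : exists i, i \in S.
  by apply/set0Pn; rewrite -cards_eq0 cS.
have cS' : #|S :\ i| = n by move: cS; rewrite (cardsD1 i) iS add1n => -[].
do 4!rewrite (split_sub _ iS).
have E : forall F : {set I} -> R, \sum_(A : {set I} | A \subset S :\ i) (F A + F (i |: A)) =
   \sum_(A : {set I} | A \subset S :\ i) (F (A :\ i) + F (i |: A)).
  move=> F; apply: eq_bigr => A; rewrite subsetD1 => /andP[_ iA].
  suff -> : A :\ i = A by [].
  by apply/setP => x; rewrite !inE; case: eqP => // ->; rewrite (negbTE iA).
rewrite !E; apply: (IH _ cS') => [A|A|A|A|A B].
- by rewrite addr_ge0.
- by rewrite addr_ge0.
- by rewrite addr_ge0.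
- by rewrite addr_ge0.
apply: AD1; rewrite ?h1 ?h2 ?h3 ?h4 //.
- by rewrite setDUl setDIl.
- have -> : i |: (A :|: B) = (i |: A) :|: (i |: B) by stac.
  have -> : i |: (A :&: B) = (i |: A) :&: (i |: B) by stac.
  exact: H.
- have -> : i |: (A :|: B) = (A :\ i) :|: (i |: B) by stac.
  have -> : (A :&: B) :\ i = (A :\ i) :&: (i |: B) by stac.
  exact: H.
- have -> : i |: (A :|: B) = (i |: A) :|: (B :\ i) by stac.
  have -> : (A :&: B) :\ i = (i |: A) :&: (B :\ i) by stac.
  exact: H.
Qed.

Lemma AD (al be ga de : {set I} -> R) :
  (forall A, 0 <= al A) -> (forall A, 0 <= be A) -> (forall A, 0 <= ga A) -> (forall A, 0 <= de A) ->
  (forall A B, al A * be B <= ga (A :|: B) * de (A :&: B)) ->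
  (\sum_A al A) * (\sum_A be A) <= (\sum_A ga A) * (\sum_A de A).
Proof.
move=> h1 h2 h3 h4 H.
have E : forall F : {set I} -> R, \sum_A F A = \sum_(A : {set I} | A \subset setT) F A.
  by move=> F; apply: eq_bigl => A; rewrite subsetT.
by rewrite !E; apply: (@AD_gen _ setT (erefl _)).
Qed.
End AD.

Definition mulat_dummy := tt.

Lemma mu_ge0 (V E : finType) (ends : E -> V * V) (R : realType) (T : R) h A xi (s : xconf V E) :
  0 <= mu ends T h A xi s.
Proof.
rewrite /mu; apply: mulr_ge0; first exact: weight_ge0.
by rewrite invr_ge0 /Zpart; apply: sumr_ge0 => i _; exact: weight_ge0.
Qed.

Lemma mulat (V E : finType) (ends : E -> V * V) (R : realType) (T : R) h A xi (s t : xconf V E) :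
  mu ends T h A xi s * mu ends T h A xi t <=
  mu ends T h A xi (xjoin s t) * mu ends T h A xi (xmeet s t).
Proof.
rewrite /mu mulrACA [X in _ <= X]mulrACA; apply: ler_wpM2r; last exact: wlat.
by apply: mulr_ge0; rewrite invr_ge0 /Zpart; apply: sumr_ge0 => i _; exact: weight_ge0.
Qed.

Lemma mu_sum (V E : finType) (ends : E -> V * V) (R : realType) (T : R) h A xi :
  0 <= \sum_(s : xconf V E) mu ends T h A xi s <= 1.
Proof.
rewrite /mu -mulr_suml -/(Zpart ends T h A xi).
have [->|nz] := eqVneq (Zpart ends T h A xi) 0; first by rewrite mul0r lexx ler01.
by rewrite divff // ler01 lexx.
Qed.

Definition pjoin (V E : finType) (x y : pconf V E) : pconf V E :=
  [ffun u => (omax (x u).1 (y u).1, omin (x u).2 (y u).2)].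
Definition pmeet (V E : finType) (x y : pconf V E) : pconf V E :=
  [ffun u => (omin (x u).1 (y u).1, omax (x u).2 (y u).2)].

Lemma pfst_join (V E : finType) (x y : pconf V E) : pfst (pjoin x y) = xjoin (pfst x) (pfst y).
Proof. by apply/ffunP => u; rewrite !ffunE. Qed.
Lemma psnd_join (V E : finType) (x y : pconf V E) : psnd (pjoin x y) = xmeet (psnd x) (psnd y).
Proof. by apply/ffunP => u; rewrite !ffunE. Qed.
Lemma pfst_meet (V E : finType) (x y : pconf V E) : pfst (pmeet x y) = xmeet (pfst x) (pfst y).
Proof. by apply/ffunP => u; rewrite !ffunE. Qed.
Lemma psnd_meet (V E : finType) (x y : pconf V E) : psnd (pmeet x y) = xjoin (psnd x) (psnd y).
Proof. by apply/ffunP => u; rewrite !ffunE. Qed.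

Definition bitOf (p : 'I_3 * 'I_3) (c d : bool) : bool :=
  if c then (if d then (2 <= p.1)%N else (1 <= p.1)%N)
  else (if d then (p.2 <= 0)%N else (p.2 <= 1)%N).

Lemma B6 (a1 a2 b1 b2 : 'I_3) c d :
  (bitOf (omax a1 b1, omin a2 b2) c d == bitOf (a1, a2) c d || bitOf (b1, b2) c d) &&
  (bitOf (omin a1 b1, omax a2 b2) c d == bitOf (a1, a2) c d && bitOf (b1, b2) c d).
Proof. by o3 a1; o3 a2; o3 b1; o3 b2; case: c; case: d. Qed.

Lemma B8 (a1 a2 b1 b2 : 'I_3) :
  [&& bitOf (a1, a2) true false == bitOf (b1, b2) true false,
      bitOf (a1, a2) true true == bitOf (b1, b2) true true,
      bitOf (a1, a2) false false == bitOf (b1, b2) false false &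
      bitOf (a1, a2) false true == bitOf (b1, b2) false true] ==> ((a1, a2) == (b1, b2)).
Proof. by o3 a1; o3 a2; o3 b1; o3 b2. Qed.

Lemma B9 (a1 a2 b1 b2 : 'I_3) :
  theta_ge (omax a1 b1, omin a2 b2) (a1, a2) && theta_ge (omax a1 b1, omin a2 b2) (b1, b2).
Proof. by o3 a1; o3 a2; o3 b1; o3 b2. Qed.

Definition enc (V E : finType) (x : pconf V E) : {set (Gbar V E * bool * bool)} :=
  [set q | bitOf (x q.1.1) q.1.2 q.2].

Lemma enc_join (V E : finType) (x y : pconf V E) : enc (pjoin x y) = enc x :|: enc y.
Proof.
apply/setP => -[[u c] d]; rewrite !inE /= ffunE.
case: (x u) => a1 a2; case: (y u) => b1 b2.
by case/andP: (B6 a1 a2 b1 b2 c d) => /eqP.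
Qed.

Lemma enc_meet (V E : finType) (x y : pconf V E) : enc (pmeet x y) = enc x :&: enc y.
Proof.
apply/setP => -[[u c] d]; rewrite !inE /= ffunE.
case: (x u) => a1 a2; case: (y u) => b1 b2.
by case/andP: (B6 a1 a2 b1 b2 c d) => _ /eqP.
Qed.

Lemma enc_inj (V E : finType) : injective (@enc V E).
Proof.
move=> x y /setP H; apply/ffunP => u.
have Hb : forall c d, bitOf (x u) c d = bitOf (y u) c d.
  by move=> c d; have := H (u, c, d); rewrite !inE.
move: Hb; case: (x u) => a1 a2; case: (y u) => b1 b2 Hb.
by move: (B8 a1 a2 b1 b2); rewrite !Hb !eqxx /= => /eqP.
Qed.

Lemma join_ge (V E : finType) (x y : pconf V E) :
  pconf_ge (pjoin x y) x /\ pconf_ge (pjoin x y) y.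
Proof.
split => u; rewrite ffunE; case: (x u) => a1 a2; case: (y u) => b1 b2;
  by case/andP: (B9 a1 a2 b1 b2).
Qed.

Definition lift (V E : finType) (R : realType) (F : pconf V E -> R) (S : {set (Gbar V E * bool * bool)}) : R :=
  \sum_(x | enc x == S) F x.

Lemma lift_enc (V E : finType) (R : realType) (F : pconf V E -> R) x : lift F (enc x) = F x.
Proof.
rewrite /lift (eq_bigl (fun y => y == x)) ?big_pred1_eq // => y.
by rewrite (inj_eq (@enc_inj V E)).
Qed.

Lemma lift_sum (V E : finType) (R : realType) (F : pconf V E -> R) :
  \sum_S lift F S = \sum_x F x.
Proof. by rewrite (partition_big (@enc V E) predT) //. Qed.

Lemma lift_ge0 (V E : finType) (R : realType) (F : pconf V E -> R) S :
  (forall x, 0 <= F x) -> 0 <= lift F S.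
Proof. by move=> h; apply: sumr_ge0 => x _. Qed.

Lemma FKGp (V E : finType) (R : realType) (F1 F2 F3 F4 : pconf V E -> R) :
  (forall x, 0 <= F1 x) -> (forall x, 0 <= F2 x) -> (forall x, 0 <= F3 x) -> (forall x, 0 <= F4 x) ->
  (forall x y, F1 x * F2 y <= F3 (pjoin x y) * F4 (pmeet x y)) ->
  (\sum_x F1 x) * (\sum_x F2 x) <= (\sum_x F3 x) * (\sum_x F4 x).
Proof.
move=> h1 h2 h3 h4 H; rewrite -!lift_sum.
apply: AD => [S|S|S|S|S S']; rewrite ?lift_ge0 //.
case: (pickP (fun x : pconf V E => enc x == S)) => [x /eqP <- | N]; last first.
  by rewrite [lift F1 _]/lift big_pred0 // mul0r mulr_ge0 ?lift_ge0.
case: (pickP (fun x : pconf V E => enc x == S')) => [y /eqP <- | N]; last first.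
  by rewrite [lift F2 _]/lift big_pred0 // mulr0 mulr_ge0 ?lift_ge0.
rewrite -(enc_join x y) -(enc_meet x y) (lift_enc F1 x) (lift_enc F2 y) (lift_enc F3 (pjoin x y)) (lift_enc F4 (pmeet x y)).
exact: H.
Qed.

Definition mkp (V E : finType) (p : xconf V E * xconf V E) : pconf V E := [ffun u => (p.1 u, p.2 u)].

Lemma prod_sum (V E : finType) (R : realType) (f g : xconf V E -> R) :
  \sum_(x : pconf V E) f (pfst x) * g (psnd x) = (\sum_s f s) * (\sum_t g t).
Proof.
rewrite (reindex (@mkp V E)); last first.
  apply: onW_bij; exists (fun x => (pfst x, psnd x)).
    by move=> [s t]; congr pair; apply/ffunP => u; rewrite !ffunE.
  by move=> x; apply/ffunP => u; rewrite !ffunE; case: (x u).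
have E1 : forall p : xconf V E * xconf V E, pfst (mkp p) = p.1.
  by move=> p; apply/ffunP => u; rewrite !ffunE.
have E2 : forall p : xconf V E * xconf V E, psnd (mkp p) = p.2.
  by move=> p; apply/ffunP => u; rewrite !ffunE.
under eq_bigr do rewrite E1 E2.
rewrite -(pair_big predT predT (fun s t => f s * g t)) /= mulr_suml.
by apply: eq_bigr => s _; rewrite mulr_sumr.
Qed.

Lemma Lprod (R : realType) (x1 y1 x2 y2 X1 Y1 X2 Y2 : R) :
  0 <= x1 -> 0 <= y1 -> 0 <= x2 -> 0 <= y2 ->
  x1 * x2 <= X1 * Y1 -> y1 * y2 <= X2 * Y2 -> (x1 * y1) * (x2 * y2) <= (X1 * Y2) * (Y1 * X2).
Proof.
move=> h1 h2 h3 h4 H1 H2.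
have -> : (X1 * Y2) * (Y1 * X2) = (X1 * Y1) * (X2 * Y2) by ring.
rewrite mulrACA; apply: ler_pM => //; exact: mulr_ge0.
Qed.

Theorem lemma2p3 (R : realType) (V E : finType) (ends : E -> V * V)
  (loopless : forall e, (ends e).1 != (ends e).2)
  (A : {set V}) (xi1 xi2 : V -> int)
  (hxi1 : forall v, v \in A -> (xi1 v == 1) || (xi1 v == -1))
  (hxi2 : forall v, v \in A -> (xi2 v == 1) || (xi2 v == -1))
  (h : V -> R) (T : R) (hT : 0 < T)
  (EvA EvB : {pred pconf V E}) :
  increasing EvA -> increasing EvB ->
  muPair ends T h A xi1 xi2 (predI EvA EvB) >=
  muPair ends T h A xi1 xi2 EvA * muPair ends T h A xi1 xi2 EvB.
Proof.
move=> incA incB.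
pose nu (x : pconf V E) := mu ends T h A xi1 (pfst x) * mu ends T h A xi2 (psnd x).
have nu0 : forall x, 0 <= nu x by move=> x; apply: mulr_ge0; exact: mu_ge0.
have nulat : forall x y, nu x * nu y <= nu (pjoin x y) * nu (pmeet x y).
  move=> x y; rewrite /nu pfst_join psnd_join pfst_meet psnd_meet.
  apply: Lprod; rewrite ?mu_ge0 //; exact: mulat.
pose F1 x := if x \in EvA then nu x else 0.
pose F2 x := if x \in EvB then nu x else 0.
pose F3 x := if (x \in EvA) && (x \in EvB) then nu x else 0.
have e1 : muPair ends T h A xi1 xi2 EvA = \sum_x F1 x by rewrite /muPair big_mkcond.
have e2 : muPair ends T h A xi1 xi2 EvB = \sum_x F2 x by rewrite /muPair big_mkcond.
have e3 : muPair ends T h A xi1 xi2 (predI EvA EvB) = \sum_x F3 x.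
  by rewrite /muPair big_mkcond; apply: eq_bigr => x _; rewrite /F3 inE.
have H : (\sum_x F1 x) * (\sum_x F2 x) <= (\sum_x F3 x) * (\sum_x nu x).
  apply: FKGp => [x|x|x|x|x y]; rewrite /F1 /F2 /F3; try by case: ifP.
  exact: nu0.
  case: ifP => xa; last by rewrite mul0r mulr_ge0 //; case: ifP.
  case: ifP => yb; last by rewrite mulr0 mulr_ge0 //; case: ifP.
  have [g1 g2] := join_ge x y.
  by rewrite (incA _ _ xa g1) (incB _ _ yb g2).
rewrite e1 e2 e3; apply: (le_trans H).
have s3 : 0 <= \sum_x F3 x by apply: sumr_ge0 => x _; rewrite /F3; case: ifP.
rewrite -[X in _ <= X]mulr1; apply: ler_wpM2l => //.
rewrite /nu prod_sum.
have /andP[a0 a1] := mu_sum ends T h A xi1.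
have /andP[b0 b1] := mu_sum ends T h A xi2.
exact: mulr_ile1.
Qed.
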